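(* Let $X$ be a compact Hausdorff space containing at least $n+1$ points, where $n\ge1$, and let $H\subset C(X)$ be an $n$-dimensional Haar subspace, where $C(X)$ is the space of real-valued continuous functions on $X$ with norm $\|f\|=\max_{x\in X}|f(x)|$. Let $A$ be a compact Hausdorff space and $\{f_a\}_{a\in A}\subset C(X)$ with $a\mapsto f_a$ continuous from $A$ into $C(X)$. Let $f^*\in H$ be a best simultaneous approximation to $\{f_a\}$ from $H$ (i.e. $\max_{a\in A}\|f_a-f^*\|\le\max_{a\in A}\|f_a-f\|$ for all $f\in H$) and suppose there exist an integer $k$ with $1\le k\le n+1$, elements $a_1,\dots,a_k\in A$, points $x_1,\dots,x_k\in X$, and positive numbers $\lambda_1,\dots,\lambda_k$ with $\sum_{i=1}^k\lambda_i=1$ such that (i') $\sum_{i=1}^k\lambda_i\,(f_{a_i}(x_i)-f^*(x_i))\,f(x_i)=0$ for all $f\in H$, and (ii) $|f_{a_i}(x_i)-f^*(x_i)|=\|f_{a_i}-f^*\|=\max_{a\in A}\|f_a-f^*\|$ for all $1\le i\le k$. If the points $x_1,\dots,x_k$ are pairwise distinct and the common value in (ii) is nonzero, then there exists $\gamma>0$ such that $$\max_{a\in A}\|f_a-h\|\ge\max_{a\in A}\|f_a-f^*\|+\gamma\|f^*-h\|\quad\text{for all } h\in H.$$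
   Context: An $n$-dimensional subspace $H\subset C(X)$ is a Haar subspace if for any $n$ distinct points $x_1,\dots,x_n\in X$ and any real numbers $r_1,\dots,r_n$ there is a unique $f\in H$ with $f(x_j)=r_j$ for $1\le j\le n$. *)

(* Defs.v *)
From HB Require Import structures.
From mathcomp Require Import all_boot all_order all_algebra.
From mathcomp Require Import all_classical all_reals all_analysis.
Set Implicit Arguments. Unset Strict Implicit. Unset Printing Implicit Defensive.
Import Order.TTheory GRing.Theory Num.Theory.
Import numFieldNormedType.Exports.
Local Open Scope classical_set_scope.
Local Open Scope ring_scope.

(* Uniform norm on C(X): ||f|| = max_{x in X} |f x| (a sup, which is attained
   for continuous f on a nonempty compact X). *)
Definition supnorm {R : realType} {X : Type} (f : X -> R) : R :=
  sup [set `|f x| | x in [set: X]].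

Definition simul_err {R : realType} {X A : Type} (F : A -> X -> R) (h : X -> R) : R :=
  sup [set supnorm (fun x => F a x - h x) | a in [set: A]].

Definition subspace_dim {R : realType} {X : topologicalType} (n : nat)
    (H : set (X -> R)) : Prop :=
  (forall f, H f -> continuous f) /\
  exists phi : 'I_n -> X -> R,
    (forall i, H (phi i)) /\
    (forall c : 'I_n -> R, (fun x => \sum_(i < n) c i * phi i x) = (fun=> 0) ->
        forall i, c i = 0) /\
    (forall f, H f <-> exists c : 'I_n -> R, f = (fun x => \sum_(i < n) c i * phi i x)).

Definition haar_subspace {R : realType} {X : topologicalType} (n : nat)
    (H : set (X -> R)) : Prop :=
  subspace_dim n H /\
  forall (xs : 'I_n -> X), injective xs ->
    forall r : 'I_n -> R, exists! f, H f /\ forall j, f (xs j) = r j.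

Definition unif_continuous_family {R : realType} {X A : topologicalType}
    (F : A -> X -> R) : Prop :=
  forall a0 : A, forall e : R, 0 < e ->
    \forall a \near a0, forall x : X, `|F a x - F a0 x| < e.

(* Main.v *)
Require Import Defs.
From HB Require Import structures.
From mathcomp Require Import all_boot all_order all_algebra.
From mathcomp Require Import all_classical all_reals all_analysis.
From mathcomp Require Import zify ring lra.
Set Implicit Arguments. Unset Strict Implicit. Unset Printing Implicit Defensive.
Import Order.TTheory GRing.Theory Num.Theory.
Import numFieldNormedType.Exports.
Local Open Scope classical_set_scope.
Local Open Scope ring_scope.

Lemma cont_bnd (R : realType) (X : topologicalType) (f : X -> R) :
  compact [set: X] -> continuous f -> exists M, forall x, `|f x| <= M.
Proof.
move=> cX cf.
have : compact (f @` [set: X]).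
  apply: continuous_compact => //; exact: continuous_subspaceT.
move=> /compact_bounded [M [Mr HM]].
exists (`|M| + 1) => x; apply: (HM (`|M| + 1)) => //.
  by rewrite (le_lt_trans (real_ler_norm Mr)) // ltrDl.
Qed.

Lemma supnorm_ge (R : realType) (X : topologicalType) (f : X -> R) x :
  compact [set: X] -> continuous f -> `|f x| <= supnorm f.
Proof.
move=> cX cf; have [M HM] := cont_bnd cX cf.
apply: sup_upper_bound; last by exists x.
split; first by exists `|f x|, x.
by exists M => _ [y _ <-].
Qed.

Lemma supnorm_le (R : realType) (X : Type) (f : X -> R) (x0 : X) c :
  (forall x, `|f x| <= c) -> supnorm f <= c.
Proof.
move=> Hc; apply: ge_sup; first by exists `|f x0|, x0.
by move=> _ [y _ <-].
Qed.

Lemma exists_max (R : realType) k (t : 'I_k -> R) : (0 < k)%N ->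
  exists i, forall j, t j <= t i.
Proof.
move=> k0; pose i0 : 'I_k := Ordinal k0.
case: (@arg_maxP _ _ _ i0 xpredT t isT) => i _ Hi.
by exists i => j; exact: Hi.
Qed.

Lemma ext_inj (X : topologicalType) n k (xs : 'I_k -> X) (p : 'I_n.+1 -> X) :
  (k <= n.+1)%N -> injective xs -> injective p ->
  exists ys : 'I_n -> X, injective ys /\
     forall (j : 'I_n) (i : 'I_k), (j : nat) = i -> ys j = xs i.
Proof.
move=> kn ixs ip.
pose s := [seq xs i | i <- enum 'I_k].
pose t := [seq p i | i <- enum 'I_n.+1].
pose l := s ++ [seq y <- t | y \notin s].
have us : uniq s by rewrite map_inj_uniq ?enum_uniq.
have ut : uniq t by rewrite map_inj_uniq ?enum_uniq.
have ul : uniq l.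
  rewrite cat_uniq us filter_uniq //= andbT.
  by apply/hasPn => y; rewrite mem_filter => /andP[].
have ss : size s = k by rewrite size_map size_enum_ord.
have st : size t = n.+1 by rewrite size_map size_enum_ord.
have hsz : (n.+1 <= size l)%N.
  rewrite size_cat size_filter.
  have : (count (mem s) t <= k)%N.
    rewrite -size_filter -ss; apply: uniq_leq_size; first exact: filter_uniq.
    by move=> y; rewrite mem_filter => /andP[].
  have := count_predC (mem s) t; rewrite st.
  have -> : count (fun y => y \notin s) t = count (predC (mem s)) t by [].
  lia.
pose x0 := p ord0.
exists (fun j => nth x0 l j); split.
  move=> j1 j2 /eqP; rewrite nth_uniq //; last 2 first.
  - by apply: leq_trans hsz; rewrite ltnS ltnW.
  - by apply: leq_trans hsz; rewrite ltnS ltnW.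
  by move=> /eqP/val_inj.
move=> j i ->; rewrite nth_cat ss ltn_ord.
by rewrite (nth_map i) ?size_enum_ord // nth_ord_enum.
Qed.
Lemma H_comb (R : realType) (X : topologicalType) n (H : set (X -> R)) :
  subspace_dim n H -> forall m (d : 'I_m -> R) (L : 'I_m -> X -> R),
  (forall j, H (L j)) -> H (fun x => \sum_(j < m) d j * L j x).
Proof.
move=> [_ [phi [_ [_ Hc]]]] m d L HL.
have /choice [C HC] : forall j, exists c : 'I_n -> R,
    L j = (fun x => \sum_(i < n) c i * phi i x).
  by move=> j; apply/Hc.
apply/Hc; exists (fun i => \sum_(j < m) d j * C j i).
apply: funext => x /=.
rewrite (eq_bigr (fun j => \sum_(i < n) d j * C j i * phi i x)); last first.
  by move=> j _; rewrite HC mulr_sumr; apply: eq_bigr => i _; rewrite mulrA.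
rewrite exchange_big /=; apply: eq_bigr => i _; by rewrite mulr_suml.
Qed.

Lemma H_lin (R : realType) (X : topologicalType) n (H : set (X -> R)) f g al be :
  subspace_dim n H -> H f -> H g -> H (fun x => al * f x + be * g x).
Proof.
move=> Hs; case: (Hs) => _ [phi [_ [_ Hc]]].
move=> /Hc [c ->] /Hc [c' ->]; apply/Hc.
exists (fun i => al * c i + be * c' i); apply: funext => x /=.
rewrite !mulr_sumr -big_split /=; apply: eq_bigr => i _.
by rewrite mulrDl !mulrA.
Qed.

Lemma aux_ineq (R : realType) (l ti M : R) : 0 < l -> l <= 1 -> ti <= M ->
  l * (M - ti) <= M -> 0 <= M -> `|ti| * l <= M.
Proof.
move=> l0 l1 tM b M0; have [ti0|ti0] := lerP 0 ti.
  rewrite ger0_norm //; nra.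
rewrite ltr0_norm //; nra.
Qed.

Theorem theorem4 (R : realType) (X A : topologicalType) (n : nat)
  (H : set (X -> R)) (F : A -> X -> R) (fstar : X -> R)
  (k : nat) (a : 'I_k -> A) (xs : 'I_k -> X) (lam : 'I_k -> R) :
  (1 <= n)%N ->
  hausdorff_space X -> compact [set: X] ->
  (exists p : 'I_n.+1 -> X, injective p) ->
  haar_subspace n H ->
  hausdorff_space A -> compact [set: A] ->
  (forall b : A, continuous (F b)) ->
  unif_continuous_family F ->
  H fstar ->
  (forall f, H f -> simul_err F fstar <= simul_err F f) ->
  (1 <= k <= n.+1)%N ->
  (forall i, 0 < lam i) ->
  \sum_(i < k) lam i = 1 ->
  (forall f, H f ->
     \sum_(i < k) lam i * (F (a i) (xs i) - fstar (xs i)) * f (xs i) = 0) ->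
  (forall i, `|F (a i) (xs i) - fstar (xs i)|
               = supnorm (fun x => F (a i) x - fstar x) /\
             supnorm (fun x => F (a i) x - fstar x) = simul_err F fstar) ->
  injective xs ->
  simul_err F fstar != 0 ->
  exists gamma : R, 0 < gamma /\
    forall h, H h ->
      simul_err F fstar + gamma * supnorm (fun x => fstar x - h x)
        <= simul_err F h.
Proof.
move=> n1 hX cX [p ip] [Hs Hhaar] hA cA Fc Fu Hfs Hopt /andP[k1 kn] lam0 lam1
  Hort Hnorm ixs E0.
set E := simul_err F fstar in Hopt Hnorm E0 *.
pose r i := F (a i) (xs i) - fstar (xs i).
have Hr : forall i, `|r i| = E by move=> i; have [-> ->] := Hnorm i.
have i0 : 'I_k := Ordinal k1.
have Epos : 0 < E by rewrite lt_def E0 -(Hr i0) normr_ge0.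
have Hcont : forall f, H f -> continuous f := Hs.1.
have rr2 i : r i * r i = E ^+ 2.
  by rewrite -(Hr i) real_normK ?num_real // expr2.
have [ys [iys Hys]] := ext_inj kn ixs ip.
have kE : k = n.+1.
  apply/eqP; rewrite eqn_leq kn /= ltnNge; apply/negP => kle.
  pose rr (j : 'I_n) := nth 0 [seq r i | i <- enum 'I_k] j.
  have [f [[Hf Hfv] _]] := Hhaar ys iys rr.
  have Hfx : forall i, f (xs i) = r i.
    move=> i; have ik : (i < n)%N := leq_trans (ltn_ord i) kle.
    rewrite -(Hys (Ordinal ik) i) // Hfv /rr /=.
    by rewrite (nth_map i) ?size_enum_ord // nth_ord_enum.
  have := Hort f Hf.
  rewrite (eq_bigr (fun i => lam i * E ^+ 2)); last first.
    by move=> i _; rewrite Hfx -mulrA rr2.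
  rewrite -mulr_suml lam1 mul1r => /eqP; rewrite sqrf_eq0 => /eqP E00.
  by move: E0; rewrite E00 eqxx.
subst k.
pose wid (j : 'I_n) : 'I_n.+1 := widen_ord (leqnSn n) j.
have ysw j : ys j = xs (wid j) by apply: Hys.
have /choice [L HL] : forall j : 'I_n, exists f, H f /\
    forall l, f (ys l) = (j == l)%:R.
  by move=> j; have [f [Hf _]] := Hhaar ys iys (fun l => (j == l)%:R); exists f.
have /choice [B HB] : forall j, exists M, forall x, `|L j x| <= M.
  by move=> j; apply: cont_bnd cX (Hcont _ (HL j).1).
pose K := \sum_(j < n) B j / lam (wid j).
have K0 : 0 <= K.
  apply: sumr_ge0 => j _; apply: divr_ge0; last exact: ltW.
  exact: le_trans (normr_ge0 _) (HB j (p ord0)).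
exists (1 + K)^-1; split; first by rewrite invr_gt0 ltr_wpDr.
move=> h Hh; pose g x := fstar x - h x.
have Hg : H g.
  suff -> : g = (fun x => 1 * fstar x + (-1) * h x) by apply: (H_lin _ _ Hs Hfs Hh).
  by apply: funext => x; rewrite /g mul1r mulN1r.
pose t i := r i * g (xs i) / E.
have ht : forall i, E + t i <= simul_err F h.
  move=> i.
  have hs : has_sup [set supnorm (fun x => F b x - h x) | b in [set: A]].
    case: (EM (has_sup [set supnorm (fun x => F b x - h x) | b in [set: A]])) => // nhs.
    have := Hopt h Hh; rewrite /simul_err sup_out // => HE.
    by move: Epos; rewrite (le_gtF HE).
  apply: le_trans (_ : supnorm (fun x => F (a i) x - h x) <= _); last first.
    by apply: sup_upper_bound hs _ _; exists (a i).
  apply: le_trans (supnorm_ge (f := fun x => F (a i) x - h x) (xs i) cX _).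
    have e2 : F (a i) (xs i) - h (xs i) = r i + g (xs i).
      by rewrite /r /g addrA subrK.
    have e1 : E + t i = r i * (r i + g (xs i)) / E.
      have aux : forall EE Ri G : R, EE != 0 -> Ri * Ri = EE ^+ 2 ->
          EE + Ri * G / EE = Ri * (Ri + G) / EE.
        by move=> EE Ri G EE0 Hrr; rewrite mulrDr mulrDl Hrr expr2 mulfK.
      exact: aux.
    rewrite e2 e1 ler_pdivrMr // -(Hr i) -normrM mulrC.
    by apply: real_ler_norm; rewrite num_real.
  move=> x; apply: cvgB; [exact: Fc | exact: Hcont].
have [im Him] := exists_max t (ltn0Sn n).
set M := t im in Him.
have sum0 : \sum_(i < n.+1) lam i * t i = 0.
  have -> : \sum_(i < n.+1) lam i * t i =
      (\sum_(i < n.+1) lam i * r i * g (xs i)) / E.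
    rewrite mulr_suml; apply: eq_bigr => i _; by rewrite /t !mulrA.
  have Hort2 : \sum_(i < n.+1) lam i * r i * g (xs i) = 0 := Hort g Hg.
  by rewrite Hort2 mul0r.
have M0 : 0 <= M.
  have : \sum_(i < n.+1) lam i * t i <= \sum_(i < n.+1) lam i * M.
    by apply: ler_sum => i _; rewrite ler_pM2l.
  by rewrite sum0 -mulr_suml lam1 mul1r.
have lamle1 i : lam i <= 1.
  rewrite -lam1 (bigD1 i) //= lerDl; apply: sumr_ge0 => j _; exact: ltW.
have bnd i : lam i * (M - t i) <= M.
  have sumM : \sum_(j < n.+1) lam j * (M - t j) = M.
    rewrite (eq_bigr (fun j => lam j * M - lam j * t j)); last first.
      by move=> j _; rewrite mulrBr.
    by rewrite sumrB sum0 subr0 -mulr_suml lam1 mul1r.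
  rewrite -[X in _ <= X]sumM (bigD1 i) //= lerDl; apply: sumr_ge0 => j _.
  by apply: mulr_ge0; [exact: ltW | rewrite subr_ge0].
have gt i : `|g (xs i)| = `|t i|.
  rewrite /t normrM normfV normrM Hr (gtr0_norm Epos) mulrC mulrA mulVf //.
  by rewrite mul1r.
have gb i : `|g (xs i)| * lam i <= M.
  by rewrite gt; apply: aux_ineq; [exact: lam0|exact: lamle1|exact: Him|exact: bnd|].
have Hrep : g = (fun x => \sum_(j < n) g (ys j) * L j x).
  have [f [_ Hu]] := Hhaar ys iys (fun l => g (ys l)).
  have e1 : f = g by apply: Hu; split.
  apply: (etrans (esym e1)).
  apply: Hu; split; first by apply: (H_comb Hs) => j; exact: (HL j).1.
  move=> l; rewrite (bigD1 l) //= (HL l).2 eqxx mulr1 big1 ?addr0 //.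
  by move=> j /negbTE jl; rewrite (HL j).2 jl mulr0.
have sg : supnorm g <= K * M.
  apply: (supnorm_le (p ord0)) => x; rewrite Hrep.
  apply: le_trans (ler_norm_sum _ _ _) _.
  rewrite /K mulr_suml; apply: ler_sum => j _; rewrite normrM.
  have lj := lam0 (wid j).
  have Bj : 0 <= B j by exact: le_trans (normr_ge0 _) (HB j x).
  have : `|g (ys j)| <= M / lam (wid j).
    by rewrite ler_pdivlMr // ysw; exact: gb.
  move=> h1; apply: le_trans (_ : M / lam (wid j) * B j <= _).
    by apply: ler_pM => //; exact: HB.
  by rewrite mulrC mulrA mulrAC.
apply: le_trans (ht im); rewrite lerD2l.
rewrite mulrC ler_pdivrMr ?ltr_wpDr //.
apply: le_trans sg _; rewrite mulrDr mulr1 mulrC lerDr.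
exact: M0.
Qed.
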